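(* Let $x=(x_n)_{n\in\mathbb{Z}}$ be an integer-valued sequence. For every $i\in\mathbb{Z}$, the set of descendants of $i$ in the record graph of $x$ is $$D(i)=\{j\in\mathbb{Z}: L_x(i)\le j\le i\},$$ where, if $L_x(i)=-\infty$, this is $\{j\in\mathbb{Z}:j\le i\}$.
   Context: Write $y(j,k)=\sum_{l=j}^{k-1}x_l$ for $j<k$. The record map is $R_x(i)=\inf\{n>i: y(i,n)\ge0\}$ if this set is nonempty, and $R_x(i)=i$ otherwise; the record graph has vertex set $\mathbb{Z}$ and directed edges $i\to R_x(i)$ for $R_x(i)\neq i$. $D(i)=\{i\}\cup\{j\ne i: R_x^n(j)=i\text{ for some }n\ge1\}$. Define $L_x(i)=\inf\{j<i: y(k,i)\ge0\text{ for all }j\le k<i\}\in\mathbb{Z}\cup\{-\infty\}$ if this set is nonempty, and $L_x(i)=i$ otherwise. *)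

(* Defs.v *)
From Stdlib Require Import ZArith Lia ClassicalEpsilon.
Open Scope Z_scope.

Fixpoint psum (x : Z -> Z) (j : Z) (m : nat) : Z :=
  match m with
  | O => 0
  | S m' => psum x j m' + x (j + Z.of_nat m')
  end.

(* y(j,k) = sum_{l=j}^{k-1} x_l  (empty sum = 0 when k <= j; only used for j < k) *)
Definition y (x : Z -> Z) (j k : Z) : Z := psum x j (Z.to_nat (k - j)).

Definition Rset (x : Z -> Z) (i n : Z) : Prop := i < n /\ 0 <= y x i n.

(* specification of R_x(i): the inf (= min, since the set is bounded below by i)
   if the set is nonempty, and i otherwise *)
Definition R_spec (x : Z -> Z) (i r : Z) : Prop :=
  (Rset x i r /\ forall n, Rset x i n -> r <= n) \/
  ((~ exists n, Rset x i n) /\ r = i).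

Definition R (x : Z -> Z) (i : Z) : Z :=
  epsilon (inhabits 0) (R_spec x i).

Definition InD (x : Z -> Z) (i j : Z) : Prop :=
  j = i \/ (j <> i /\ exists n : nat, (1 <= n)%nat /\ Nat.iter n (R x) j = i).

Definition Lset (x : Z -> Z) (i j : Z) : Prop :=
  j < i /\ forall k, j <= k < i -> 0 <= y x k i.

(* values in Z ∪ {-oo}: Some m = m, None = -oo.
   Spec of L_x(i): inf of Lset (min if bounded below, -oo if not) when Lset
   is nonempty, and i otherwise. *)
Definition L_spec (x : Z -> Z) (i : Z) (l : option Z) : Prop :=
  (exists m, l = Some m /\ Lset x i m /\ forall j, Lset x i j -> m <= j) \/
  (l = None /\ (exists j, Lset x i j) /\ forall m, exists j, Lset x i j /\ j < m) \/
  (l = Some i /\ ~ exists j, Lset x i j).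

Definition L (x : Z -> Z) (i : Z) : option Z :=
  epsilon (inhabits None) (L_spec x i).

(* Main.v *)
Require Import Defs.
From Stdlib Require Import ZArith Lia Classical ClassicalEpsilon.
Open Scope Z_scope.

Lemma psum_add x j a b :
  psum x j (a + b)%nat = psum x j a + psum x (j + Z.of_nat a) b.
Proof.
  induction b as [|b IH]; simpl.
  - rewrite Nat.add_0_r; ring.
  - rewrite Nat.add_succ_r; simpl. rewrite IH, Nat2Z.inj_add, Z.add_assoc; ring.
Qed.

Lemma y_split x k r i : k <= r -> r <= i -> y x k i = y x k r + y x r i.
Proof.
  intros H1 H2. unfold y.
  replace (Z.to_nat (i-k)) with (Z.to_nat (r-k) + Z.to_nat (i-r))%nat by lia.
  rewrite psum_add. do 3 f_equal. lia.
Qed.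

Lemma y_diag x k : y x k k = 0.
Proof. unfold y; rewrite Z.sub_diag; reflexivity. Qed.

Lemma min_exists (P : Z -> Prop) b n : P n -> (forall m, P m -> b < m) ->
  exists m, P m /\ forall k, P k -> m <= k.
Proof.
  intros Hn Hb.
  assert (H: forall N : nat, forall n, P n -> n - b <= Z.of_nat N ->
     exists m, P m /\ forall k, P k -> m <= k).
  { induction N as [|N IH]; intros n0 Hn0 Hle.
    - specialize (Hb _ Hn0). lia.
    - destruct (classic (exists k, P k /\ k < n0)) as [[k [Hk Hlt]]|Hno].
      + apply (IH k Hk). lia.
      + exists n0. split; auto. intros k Hk.
        destruct (Z_lt_le_dec k n0); auto. exfalso; eauto. }
  apply (H (Z.to_nat (n - b)) n Hn). lia.
Qed.

Lemma R_spec_ex x i : exists r, R_spec x i r.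
Proof.
  destruct (classic (exists n, Rset x i n)) as [[n Hn]|Hno].
  - destruct (min_exists (Rset x i) i n Hn) as [m Hm].
    + intros m [H _]; auto.
    + exists m; left; auto.
  - exists i; right; auto.
Qed.

Lemma R_prop x i : R_spec x i (R x i).
Proof. unfold R. apply epsilon_spec, R_spec_ex. Qed.

Lemma L_spec_ex x i : exists l, L_spec x i l.
Proof.
  destruct (classic (exists j, Lset x i j)) as [[j Hj]|Hno].
  - destruct (classic (exists b, forall j, Lset x i j -> b < j)) as [[b Hb]|Hnb].
    + destruct (min_exists (Lset x i) b j Hj Hb) as [m Hm].
      exists (Some m); left; exists m; tauto.
    + exists None; right; left. split; [reflexivity|split; [eauto|]]. intros m.
      apply NNPP; intro Hc. apply Hnb. exists (m - 1). intros j0 Hj0.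
      destruct (Z_lt_le_dec (m-1) j0); auto. exfalso; apply Hc; exists j0; split; auto; lia.
  - exists (Some i); right; right; auto.
Qed.

Lemma L_prop x i : L_spec x i (L x i).
Proof. unfold L. apply epsilon_spec, L_spec_ex. Qed.

Definition Pd x j i := j <= i /\ forall k, j <= k < i -> 0 <= y x k i.

Lemma Pd_step x j i : Pd x (R x j) i -> Pd x j i.
Proof.
  intros [H1 H2]. destruct (R_prop x j) as [[[Hr Hy] Hmin]|[_ Heq]].
  - split; [lia|]. intros k Hk.
    destruct (Z_lt_le_dec k (R x j)).
    + rewrite (y_split x k (R x j) i) by lia.
      assert (0 <= y x k (R x j)).
      { destruct (Z.eq_dec k j) as [->|Hne]; [lia|].
        rewrite (y_split x j k (R x j)) in Hy by lia.
        assert (~ (0 <= y x j k)) by (intro; assert (R x j <= k) by (apply Hmin; split; lia); lia).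
        lia. }
      destruct (Z.eq_dec (R x j) i) as [He|]; [rewrite He, y_diag; rewrite He in H; lia|].
      assert (0 <= y x (R x j) i) by (apply H2; lia). lia.
    + apply H2; lia.
  - rewrite Heq in *; split; auto.
Qed.

Lemma Pd_iter x n j i : Nat.iter n (R x) j = i -> Pd x j i.
Proof.
  revert j. induction n as [|n IH]; intros j H.
  - simpl in H; subst; split; [lia|]; intros; lia.
  - rewrite Nat.iter_succ_r in H. apply Pd_step, IH, H.
Qed.

Lemma reach x i : forall N : nat, forall j, i - j <= Z.of_nat N -> Lset x i j ->
  exists n : nat, (1 <= n)%nat /\ Nat.iter n (R x) j = i.
Proof.
  induction N as [|N IH]; intros j HN [Hj Hy].
  - lia.
  - assert (Hri : Rset x j i) by (split; [lia| apply Hy; lia]).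
    destruct (R_prop x j) as [[[Hr Hry] Hmin]|[Hno _]]; [|exfalso; eauto].
    assert (R x j <= i) by (apply Hmin; auto).
    destruct (Z.eq_dec (R x j) i) as [He|Hne].
    + exists 1%nat; split; [lia|]; simpl; auto.
    + destruct (IH (R x j)) as [n [Hn Hit]]; [lia| split; [lia|intros; apply Hy; lia] |].
      exists (S n); split; [lia|]. rewrite Nat.iter_succ_r; auto.
Qed.

Theorem lemma2p16 (x : Z -> Z) (i : Z) :
  forall j : Z,
    InD x i j <->
    match L x i with
    | Some l => l <= j <= i
    | None => j <= i
    end.
Proof.
  intros j. pose proof (L_prop x i) as HL. split.
  - intros HD.
    assert (HP : Pd x j i).
    { destruct HD as [->|[_ [n [_ Hn]]]]; [split; [lia|intros; lia]|eapply Pd_iter; eauto]. }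
    destruct HP as [Hji Hk].
    destruct (Z.eq_dec j i) as [->|Hne].
    + destruct HL as [[m [-> [[Hm _] _]]]|[[-> _]|[-> _]]]; lia.
    + assert (Hl : Lset x i j) by (split; [lia|auto]).
      destruct HL as [[m [-> [_ Hmin]]]|[[-> _]|[-> Hno]]].
      * specialize (Hmin j Hl); lia.
      * lia.
      * exfalso; eauto.
  - intros H. destruct (Z.eq_dec j i) as [->|Hne]; [left; auto|right; split; auto].
    assert (Hl : Lset x i j).
    { destruct HL as [[m [Heq [[Hm Hmy] _]]]|[[Heq [_ Hall]]|[Heq _]]]; rewrite Heq in H.
      - split; [lia|]. intros; apply Hmy; lia.
      - destruct (Hall j) as [j' [[_ Hy'] Hlt]]. split; [lia|]. intros; apply Hy'; lia.
      - lia. }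
    apply (reach x i (Z.to_nat (i - j))); [lia|auto].
Qed.
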